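(* Let $n\ge 2$ be an integer and let $$ P(x)=x^{2n}+ d_{2n-1} x^{2n-1}+\dots + d_1 x +1 $$ with real coefficients $d_i$ satisfying $d_{2n-i}=d_i$ for $i=1,\dots,2n-1$ and $|d_i|<1/(2n-2)$ for all $i$. Then all roots of $P$ lie on the unit circle. *)

(* Defs.v *)
From HB Require Import structures.
From mathcomp Require Import all_boot all_order all_algebra.
From mathcomp Require Export complex.
Set Implicit Arguments. Unset Strict Implicit. Unset Printing Implicit Defensive.
Import Order.TTheory GRing.Theory Num.Theory.
Local Open Scope ring_scope.

Definition Ppoly (R : rcfType) (n : nat) (d : nat -> R) : {poly R} :=
  'X^(2 * n) + \sum_(1 <= i < 2 * n) (d i)%:P * 'X^i + 1.

(* Main.v *)
Require Import Defs.
From HB Require Import structures.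
From mathcomp Require Import all_boot all_order all_algebra.
From mathcomp Require Import complex.
From mathcomp Require Import ring lra zify.
Import Order.TTheory GRing.Theory Num.Theory.
Local Open Scope ring_scope.
Local Open Scope complex_scope.

Definition coefa (R : rcfType) (n : nat) (d : nat -> R) (i : nat) : R :=
  if (i == 0)%N || (i == 2 * n)%N then 1 else d i.
Arguments coefa {R}.

Definition Sv (R : rcfType) (n : nat) (d : nat -> R) (v : nat -> R) (x : R[i]) : R[i] :=
  \sum_(i < (2 * n).+1) (v i * coefa n d i)%:C * x ^+ i.
Arguments Sv {R}.

Lemma Sv_eval (R : rcfType) (n : nat) (d : nat -> R) (x : R[i]) : (0 < n)%N ->
  (map_poly (real_complex R) (Ppoly n d)).[x] = Sv n d (fun _ => 1) x.
Proof.
move=> n0.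
rewrite /Ppoly !rmorphD rmorph_sum /= rmorph1 map_polyXn !hornerE horner_sum.
have N0 : (0 < 2 * n)%N by rewrite muln_gt0.
rewrite /Sv -(big_mkord xpredT (fun i => (1 * coefa n d i)%:C * x ^+ i)).
rewrite big_nat_recr //= [in RHS]big_ltn //.
rewrite /coefa !eqxx orbT !mul1r expr0.
rewrite [LHS]addrC (addrC (x ^+ _)) addrA; congr (_ + _ + _).
apply: eq_big_nat => i /andP[i1 i2].
rewrite rmorphM /= map_polyC map_polyXn hornerE /= hornerE.
have -> : (i == 0)%N = false by apply/negbTE; rewrite -lt0n.
have -> : (i == 2 * n)%N = false by apply/negbTE; rewrite neq_ltn i2.
by rewrite hornerX mul1r.
Qed.

Lemma coefa_sym (R : rcfType) (n : nat) (d : nat -> R) :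
  (forall i : nat, (1 <= i <= 2 * n - 1)%N -> d (2 * n - i)%N = d i) ->
  forall i, (i <= 2 * n)%N -> coefa n d (2 * n - i)%N = coefa n d i.
Proof.
move=> hsym i hi; rewrite /coefa.
have [->|i0] := eqVneq i 0%N; first by rewrite subn0 eqxx orbT.
have [->|iN] := eqVneq i (2 * n)%N; first by rewrite subnn eqxx.
have h1 : (2 * n - i == 0)%N = false by apply/negbTE; move: i0 iN hi; lia.
have h2 : (2 * n - i == 2 * n)%N = false by apply/negbTE; move: i0 iN hi; lia.
rewrite h1 h2 /=; apply: hsym.
apply/andP; split; move: i0 iN hi; lia.
Qed.

Lemma Sv_star (R : rcfType) (n : nat) (d : nat -> R) (v : nat -> R) (x : R[i]) :
  (forall i : nat, (1 <= i <= 2 * n - 1)%N -> d (2 * n - i)%N = d i) ->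
  x != 0 ->
  x ^+ (2 * n) * conjc (Sv n d v (conjc x)^-1) = Sv n d (fun i => v (2 * n - i)%N) x.
Proof.
move=> hsym x0.
rewrite /Sv rmorph_sum mulr_sumr [RHS](reindex_inj rev_ord_inj) /=.
apply: eq_bigr => i _.
have hi : (i <= 2 * n)%N by rewrite -ltnS.
have cr : forall r : R, conjc (r%:C) = r%:C by move=> r; rewrite /= oppr0.
rewrite subSS subKn // coefa_sym // rmorphM /= oppr0 complexr0 rmorphXn /= conjc_inv conjcK.
rewrite mulrCA; congr (_ * _).
rewrite -{1}(subnK hi) exprD exprVn mulfK // expf_neq0 //.
Qed.

Definition wt (R : rcfType) (n i : nat) : R :=
  if (n < i)%N then 1 else if i == n then 2^-1 else 0.
Arguments wt {R}.

Lemma Sv_split (R : rcfType) (n : nat) (d : nat -> R) (x : R[i]) :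
  Sv n d (fun _ => 1) x = Sv n d (wt n) x + Sv n d (fun i => wt n (2 * n - i)%N) x.
Proof.
rewrite /Sv -big_split; apply: eq_bigr => i _ /=.
rewrite -mulrDl -rmorphD -mulrDl; congr ((_ * _)%:C * _).
have hi : (i <= 2 * n)%N by rewrite -ltnS.
rewrite /wt.
have [h|h] := ltnP n i.
  have -> : (n < 2 * n - i)%N = false by apply/negbTE; move: h hi; lia.
  have -> : (2 * n - i == n)%N = false by apply/negbTE; move: h hi; lia.
  by rewrite addr0.
have [e|ne] := eqVneq (nat_of_ord i) n.
  rewrite e.
  have -> : (2 * n - n = n)%N by lia.
  by rewrite ltnn eqxx {1}(splitr 1) mul1r.
have -> : (n < 2 * n - i)%N by move: h ne; lia.
by rewrite add0r.
Qed.

Lemma normCr (R : rcfType) (r : R) : `|r%:C| = `|r|%:C.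
Proof. by rewrite normc_def /= expr0n addr0 sqrtr_sqr. Qed.

Lemma Sv_root_bound (R : rcfType) (n : nat) (d : nat -> R) (z : R[i]) :
  (2 <= n)%N ->
  (forall i : nat, (1 <= i <= 2 * n - 1)%N -> `|d i| < 1 / (2 * n - 2)%:R) ->
  Sv n d (wt n) z = 0 -> `|z| < 1.
Proof.
move=> hn hb hz.
rewrite real_ltNge ?normr_real ?real1 //; apply/negP => z1.
set c : R := 1 / (2 * n - 2)%:R.
set F := fun i : nat => (wt n i * coefa n d i)%:C * z ^+ i.
have E : Sv n d (wt n) z = \sum_(n <= i < 2 * n) F i + z ^+ (2 * n).
  rewrite /Sv -(big_mkord xpredT F) big_nat_recr //= (@big_cat_nat _ _ _ n) //=; last by lia.
  rewrite big_nat big1 ?add0r; last first.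
    move=> i /andP[_ hi]; rewrite /F /wt.
    have -> : (n < i)%N = false by apply/negbTE; lia.
    have -> : (i == n) = false by apply/negbTE; lia.
    by rewrite mul0r mul0r.
  congr (_ + _).
  rewrite /F /wt /coefa.
  have -> : (n < 2 * n)%N by lia.
  by rewrite eqxx orbT mulr1 mul1r.
move: hz; rewrite E => /eqP; rewrite addr_eq0 => /eqP hz.
have zN : 0 < `|z| ^+ (2 * n) by rewrite exprn_gt0 // (lt_le_trans ltr01).
have : `|z| ^+ (2 * n) < `|z| ^+ (2 * n).
  rewrite -{1}normrX -[z ^+ _]opprK -hz normrN.
  apply: (le_lt_trans (ler_norm_sum _ _ _)).
  apply: (@lt_le_trans _ _ (\sum_(n <= i < 2 * n) (c%:C * `|z| ^+ (2 * n)))).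
    apply: ltr_sum_nat; first by lia.
    move=> i /andP[i1 i2].
    rewrite /F normrM normrX normCr.
    apply: (@le_lt_trans _ _ (`|wt n i * coefa n d i|%:C * `|z| ^+ (2 * n))).
      by rewrite ler_wpM2l // ?ler_weXn2l //; [rewrite ler0c | lia].
    rewrite ltr_pM2r // ltcR.
    have -> : coefa n d i = d i.
      rewrite /coefa.
      have -> : (i == 0)%N = false by apply/negbTE; lia.
      by have -> : (i == 2 * n)%N = false by apply/negbTE; lia.
    apply: (le_lt_trans _ (hb i _)); last by apply/andP; split; lia.
    rewrite normrM ler_piMl //.
    rewrite /wt; case: ifP => _; first by rewrite normr1.
    case: ifP => _; last by rewrite normr0.
    by rewrite ger0_norm ?invr_ge0 ?ler0n // invf_le1 ?ler1n ?ltr0n.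
  rewrite sumr_const_nat -mulrnAl ler_piMl ?(ltW zN) //.
  have -> : (2 * n - n = n)%N by lia.
  rewrite -rmorphMn /= -[1]/(1%:C) lecR /c -mulr_natr mul1r.
  rewrite mulrC -/(_ / _) ler_pdivrMr ?mul1r ?ler_nat; first lia.
  rewrite ltr0n; lia.
by rewrite ltxx.
Qed.

Lemma blaschke_factor (R : rcfType) (x z : R[i]) :
  1 < `|x| -> `|z| < 1 -> `|1 - x * conjc z| < `|x - z|.
Proof.
move=> x1 z1.
have x0 : 0 <= `|x| by [].
rewrite -ltr_sqr ?nnegrE //.
rewrite -subr_gt0.
have -> : `|x - z| ^+ 2 - `|1 - x * conjc z| ^+ 2 = (`|x| ^+ 2 - 1) * (1 - `|z| ^+ 2).
  rewrite !sqr_normc !rmorphB rmorphM /= conjcK oppr0.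
  rewrite (_ : (1 +i* 0 : R[i]) = 1) //.
  ring.
apply: mulr_gt0; rewrite subr_gt0.
  by rewrite exprn_egt1.
by rewrite exprn_ilt1.
Qed.

Lemma conj_prod_aux (R : rcfType) (x y : R[i]) (r : seq R[i]) :
  x ^+ size r * conjc (\prod_(z <- r) (y - z)) = \prod_(z <- r) (x * conjc (y - z)).
Proof.
elim: r => [|a r IH]; first by rewrite !big_nil expr0 mul1r rmorph1.
by rewrite !big_cons /= exprS rmorphM /= -IH mulrACA.
Qed.

Lemma outside_nonroot (R : rcfType) (n : nat) (d : nat -> R) (x : R[i]) :
  (2 <= n)%N ->
  (forall i : nat, (1 <= i <= 2 * n - 1)%N -> d (2 * n - i)%N = d i) ->
  (forall i : nat, (1 <= i <= 2 * n - 1)%N -> `|d i| < 1 / (2 * n - 2)%:R) ->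
  1 < `|x| -> Sv n d (fun _ => 1) x != 0.
Proof.
move=> hn hsym hb x1.
pose E := fun i => (wt n i * coefa n d i)%:C.
pose Mp := \poly_(i < (2 * n).+1) E i.
have hM : forall y, Mp.[y] = Sv n d (wt n) y by move=> y; rewrite horner_poly.
have EN : E (2 * n)%N = 1.
  rewrite /E /wt /coefa.
  have -> : (n < 2 * n)%N by lia.
  by rewrite eqxx orbT mulr1.
have EN0 : E (2 * n)%N != 0 by rewrite EN oner_eq0.
have [r hr] := closed_field_poly_normal Mp.
have lc : lead_coef Mp = 1 by rewrite lead_coef_poly.
rewrite lc scale1r in hr.
have sz : size r = (2 * n)%N.
  have := @size_poly_eq _ (2 * n).+1 E EN0; rewrite -/Mp hr size_prod_XsubC.
  by case.
have rin : forall z, z \in r -> `|z| < 1.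
  move=> z zr; apply: (@Sv_root_bound R n d z hn hb).
  by rewrite -hM; apply/rootP; rewrite hr root_prod_XsubC.
have x0 : x != 0 by rewrite -normr_gt0 (lt_trans ltr01).
rewrite Sv_split.
set A := Sv n d (wt n) x.
set B := Sv n d _ x.
have hB : B = \prod_(z <- r) (1 - x * conjc z).
  rewrite /B -Sv_star // -hM hr horner_prod.
  rewrite (eq_bigr (fun z => (conjc x)^-1 - z)); last by move=> z _; rewrite hornerXsubC.
  rewrite -sz conj_prod_aux; apply: eq_bigr => z _.
  rewrite rmorphB /= conjc_inv conjcK mulrBr divff //.
have hA : A = \prod_(z <- r) (x - z).
  by rewrite /A -hM hr horner_prod; apply: eq_bigr => z _; rewrite hornerXsubC.
have lt : `|B| < `|A|.
  rewrite hA hB !normr_prod !big_seq; apply: ltr_prod.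
    case: r sz {hr rin hA hB} => [|a r] /=; first lia.
    by rewrite in_cons eqxx.
  move=> z zr; rewrite normr_ge0 /=; apply: blaschke_factor => //.
  exact: rin.
apply/eqP => hAB.
move: lt; rewrite (_ : B = - A); last by apply/eqP; rewrite -addr_eq0 addrC hAB.
by rewrite normrN ltxx.
Qed.

Theorem lemma3 (R : rcfType) (n : nat) (d : nat -> R)
  (hn : (2 <= n)%N)
  (hsym : forall i : nat, (1 <= i <= 2 * n - 1)%N -> d (2 * n - i)%N = d i)
  (hbound : forall i : nat, (1 <= i <= 2 * n - 1)%N -> `|d i| < 1 / (2 * n - 2)%:R)
  (z : R[i]) :
  root (map_poly (real_complex R) (Ppoly n d)) z -> `|z| = 1.
Proof.
move=> /rootP; rewrite Sv_eval; last by lia.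
move=> hz.
have key := @outside_nonroot R n d _ hn hsym hbound.
case: (real_ltgtP (normr_real z) (@real1 _)) => // h.
  have z0 : z != 0.
    apply/eqP => z0; move: hz; rewrite z0 /Sv big_ord_recl expr0 mulr1 big1.
      rewrite addr0 /coefa eqxx /= mul1r => /eqP; by rewrite oner_eq0.
    by move=> i _; rewrite expr0n /= mulr0.
  set y := (conjc z)^-1.
  have y1 : 1 < `|y|.
    by rewrite /y normfV normcJ invf_gt1 // normr_gt0.
  have y0 : y != 0 by rewrite /y invr_eq0 conjc_eq0.
  have := key y y1; rewrite -(@Sv_star R n d (fun _ => 1) y hsym y0).
  by rewrite /y conjc_inv conjcK invrK hz rmorph0 mulr0 eqxx.
by move: (key z h); rewrite hz eqxx.
Qed.
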